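(* Let $(X,\mathcal{R})$ be an imprimitive symmetric association scheme with $6$ classes, cometric with respect to the ordering $E_0,\dots,E_6$, with first multiplicity $m>2$ and Krein array $\{m,m-1,1,b_3^*,b_4^*,1;\ 1,c_2^*,m-b_3^*,1,c_5^*,m\}$, where $a_2^*=a_4^*+a_5^*$. Define polynomials $v_i^*$ by $v_0^*(x)=1$, $v_1^*(x)=x$ and $xv_i^*(x)=c_{i+1}^*v_{i+1}^*(x)+a_i^*v_i^*(x)+b_{i-1}^*v_{i-1}^*(x)$ for $1\le i\le 6$, where one sets $c_7^*=1$. Then $$mc_2^*c_3^*c_5^*v_7^*(x)=\bigl(x^3-a_2^*x^2-(m+c_2^*(m-1))x+ma_2^*-a_5^*c_3^*\bigr)(x^2+c_2^*x-m)(x-m)(x+1).$$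
   Context: A symmetric association scheme with $d$ classes is a pair $(X,\mathcal{R})$, $X$ finite, $\mathcal{R}=\{R_0,\dots,R_d\}$ symmetric relations with adjacency matrices $A_i$ such that $A_0=I$, $\sum_iA_i=J$, and each $A_iA_j$ is a linear combination of the $A_h$. Its primitive idempotents are $E_0=\frac1{|X|}J,E_1,\dots,E_d$, Krein parameters $q_{ij}^h$ are defined by $E_i\circ E_j=\frac{1}{|X|}\sum_hq_{ij}^hE_h$ ($\circ$ entrywise product), $m_i=\mathrm{rank}(E_i)$. Imprimitive means some $(X,R_i)$, $1\le i\le d$, is disconnected. Cometric with respect to $E_0,\dots,E_d$ means $q_{ij}^h=0$ if $i+j<h$ and $q_{ij}^h\ne0$ if $i+j=h$. Then $m=m_1$, $a_i^*=q_{1i}^i$, $b_i^*=q_{1,i+1}^i$, $c_i^*=q_{1,i-1}^i$, with $a_i^*+b_i^*+c_i^*=m$, and the Krein array is $\{b_0^*,\dots,b_{d-1}^*;c_1^*,\dots,c_d^*\}$. In the given situation, $c_3^*=m-b_3^*$ and $a_1^*=a_3^*=a_6^*=0$. *)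

(* Defs.v *)
From HB Require Import structures.
From mathcomp Require Import all_boot all_order all_algebra.
Set Implicit Arguments. Unset Strict Implicit. Unset Printing Implicit Defensive.
Import Order.TTheory GRing.Theory Num.Theory.
Local Open Scope ring_scope.

Definition adjmx (R : fieldType) (n : nat) (Rl : rel 'I_n) : 'M[R]_n :=
  \matrix_(x, y) (Rl x y)%:R.

Definition sym_assoc_scheme (R : fieldType) (n d : nat)
    (Rl : 'I_d.+1 -> rel 'I_n) : Prop :=
  (0 < n)%N /\
  [/\ (forall x y, Rl ord0 x y = (x == y)),
      (forall x y, #|[pred i | Rl i x y]| = 1%N),
      (forall i, exists x y, Rl i x y),
      (forall i x y, Rl i x y = Rl i y x)
    & (forall i j, exists p : 'I_d.+1 -> R,
         adjmx R (Rl i) *m adjmx R (Rl j) = \sum_h p h *: adjmx R (Rl h))].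

Definition prim_idempotents (R : fieldType) (n d : nat)
    (Rl : 'I_d.+1 -> rel 'I_n) (E : 'I_d.+1 -> 'M[R]_n) : Prop :=
  [/\ E ord0 = n%:R^-1 *: const_mx 1,
      (forall i j, E i *m E j = if i == j then E i else 0),
      (forall i, E i != 0),
      \sum_i E i = 1%:M
    & (forall i, exists c : 'I_d.+1 -> R, E i = \sum_h c h *: adjmx R (Rl h))].

Definition krein_params (R : fieldType) (n d : nat)
    (E : 'I_d.+1 -> 'M[R]_n) (q : 'I_d.+1 -> 'I_d.+1 -> 'I_d.+1 -> R) : Prop :=
  forall i j, map2_mx *%R (E i) (E j) = n%:R^-1 *: \sum_h q i j h *: E h.

Definition imprimitive (n d : nat) (Rl : 'I_d.+1 -> rel 'I_n) : Prop :=
  exists i : 'I_d.+1, i != ord0 /\ exists x y, ~~ connect (Rl i) x y.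

Definition cometric (R : fieldType) (d : nat)
    (q : 'I_d.+1 -> 'I_d.+1 -> 'I_d.+1 -> R) : Prop :=
  (forall i j h : 'I_d.+1, (i + j < h)%N -> q i j h = 0) /\
  (forall i j h : 'I_d.+1, (i + j)%N = h -> q i j h != 0).

(* a_i^* = q_{1i}^i, b_i^* = q_{1,i+1}^i, c_i^* = q_{1,i-1}^i
   (only used with indices in range) *)
Definition astar (R : fieldType) (d : nat) (q : 'I_d.+1 -> 'I_d.+1 -> 'I_d.+1 -> R)
  (i : nat) : R := q (inord 1) (inord i) (inord i).
Definition bstar (R : fieldType) (d : nat) (q : 'I_d.+1 -> 'I_d.+1 -> 'I_d.+1 -> R)
  (i : nat) : R := q (inord 1) (inord i.+1) (inord i).
Definition cstar (R : fieldType) (d : nat) (q : 'I_d.+1 -> 'I_d.+1 -> 'I_d.+1 -> R)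
  (i : nat) : R := q (inord 1) (inord i.-1) (inord i).

(* Main.v *)
Require Import Defs.
From HB Require Import structures.
From mathcomp Require Import all_boot all_order all_algebra.
From mathcomp Require Import ring lra.
Import Order.TTheory GRing.Theory Num.Theory.
Local Open Scope ring_scope.

Lemma poly_eval_inj (R : realFieldType) (p q : {poly R}) :
  (forall x, p.[x] = q.[x]) -> p = q.
Proof.
move=> H; apply/eqP; rewrite -subr_eq0; apply/negPn/negP => nz.
set d := p - q in nz.
have H1 : all (root d) [seq i%:R | i <- iota 0 (size d)].
  by apply/allP => y /mapP [i _ ->]; rewrite /root /d hornerD hornerN H subrr.
have H2 : uniq [seq (i%:R : R) | i <- iota 0 (size d)].
  rewrite map_inj_uniq ?iota_uniq //.
  by move=> i j /eqP; rewrite eqr_nat => /eqP.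
by have := max_poly_roots nz H1 H2; rewrite size_map size_iota ltnn.
Qed.

Lemma solve_lin (R : fieldType) (c xy z r : R) :
  c != 0 -> xy = c * z + r -> z = (xy - r) / c.
Proof. by move=> cn ->; field. Qed.
Arguments solve_lin {R c xy z r}.

Lemma alg (R : realFieldType) (m : R) (a b c : nat -> R) (v : nat -> {poly R}) :
  m != 0 -> c 2%N != 0 -> c 3%N != 0 -> c 5%N != 0 ->
  b 0%N = m -> b 1%N = m - 1 -> b 2%N = 1 -> b 5%N = 1 ->
  c 1%N = 1 -> c 3%N = m - b 3%N -> c 4%N = 1 -> c 6%N = m ->
  a 2%N = a 4%N + a 5%N ->
  a 1%N + b 1%N + c 1%N = m -> a 2%N + b 2%N + c 2%N = m ->
  a 3%N + b 3%N + c 3%N = m -> a 4%N + b 4%N + c 4%N = m ->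
  a 5%N + b 5%N + c 5%N = m -> a 6%N + c 6%N = m ->
  v 0%N = 1 -> v 1%N = 'X ->
  (forall i : nat, (1 <= i <= 6)%N ->
     'X * v i = (if i == 6%N then 1 else c i.+1) *: v i.+1
                + a i *: v i + b i.-1 *: v i.-1) ->
  (m * c 2%N * c 3%N * c 5%N) *: v 7%N =
    ('X ^+ 3 - a 2%N *: 'X ^+ 2 - (m + c 2%N * (m - 1)) *: 'X
       + (m * a 2%N - a 5%N * c 3%N)%:P)
    * ('X ^+ 2 + c 2%N *: 'X - m%:P) * ('X - m%:P) * ('X + 1).
Proof.
move=> m0 c20 c30 c50 b0 b1 b2 b5 c1 c3 c4 c6 a2e s1 s2 s3 s4 s5 s6 v0 v1 rec.
have ea1 : a 1%N = 0 by lra.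
have ea2 : a 2%N = m - 1 - c 2%N by lra.
have ea3 : a 3%N = 0 by lra.
have ea4 : a 4%N = m - b 4%N - 1 by lra.
have ea5 : a 5%N = m - 1 - c 5%N by lra.
have ea6 : a 6%N = 0 by lra.
have eb4 : b 4%N = c 2%N - c 5%N - 1 + m by lra.
apply: poly_eval_inj => x.
have r i : (1 <= i <= 6)%N -> x * (v i).[x] = (if i == 6%N then 1 else c i.+1) * (v i.+1).[x]
                + (a i * (v i).[x] + b i.-1 * (v i.-1).[x]).
  move=> Hi; have E := congr1 (fun p => p.[x]) (rec i Hi); rewrite !hornerE in E.
  by rewrite E addrA.
have y7 := solve_lin (oner_neq0 R) (r 6%N erefl).
have c60 : c 6%N != 0 by rewrite c6.
have y6 := solve_lin c60 (r 5%N erefl).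
have y5 := solve_lin c50 (r 4%N erefl).
have c40 : c 4%N != 0 by rewrite c4 oner_neq0.
have y4 := solve_lin c40 (r 3%N erefl).
have y3 := solve_lin c30 (r 2%N erefl).
have y2 := solve_lin c20 (r 1%N erefl).
simpl in y7, y6, y5, y4, y3, y2.
rewrite !(hornerZ, hornerM, hornerD, hornerN, hornerX, hornerC, hornerXn, hornerC).
rewrite y7 y6 y5 y4 y3 y2 v1 v0 !(hornerX, hornerC).
rewrite ea1 ea2 ea3 ea4 ea5 ea6 eb4 b0 b1 b2 b5 c3 c4 c6.
rewrite c3 in c30.
field.
by rewrite c30 c20 c50 m0.
Qed.

Lemma idem_aux (F : fieldType) r n (C : 'M[F]_(n, r)) (B : 'M[F]_(r, n)) L Rr :
  L *m C = 1%:M -> B *m Rr = 1%:M -> (C *m B) *m (C *m B) = C *m B -> B *m C = 1%:M.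
Proof.
move=> HL HR AA.
have h1 : L *m (C *m B) *m Rr = 1%:M by rewrite mulmxA HL mul1mx HR.
have h2 : L *m ((C *m B) *m (C *m B)) *m Rr = B *m C.
  by rewrite !mulmxA HL mul1mx -!mulmxA HR mulmx1.
by rewrite -h2 AA h1.
Qed.

Lemma trace_idem (F : fieldType) n (A : 'M[F]_n) : A *m A = A -> \tr A = (\rank A)%:R.
Proof.
move=> AA.
have EE : col_base A *m row_base A = A := mulmx_base A.
have [L HL] := row_fullP (col_base_full A).
have [Rr HR] := row_freeP (row_base_free A).
have BC : row_base A *m col_base A = 1%:M.
  apply: (@idem_aux F (\rank A) n (col_base A) (row_base A) L Rr).
  - exact: HL.
  - exact: HR.
  - by rewrite EE.
transitivity (\tr (col_base A *m row_base A)); first by rewrite EE.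
by rewrite mxtrace_mulC BC mxtrace1.
Qed.

Theorem lemma4p1 (R : realFieldType) (n : nat) (Rl : 'I_7 -> rel 'I_n)
    (E : 'I_7 -> 'M[R]_n) (q : 'I_7 -> 'I_7 -> 'I_7 -> R)
    (v : nat -> {poly R}) :
  sym_assoc_scheme R Rl ->
  imprimitive Rl ->
  prim_idempotents Rl E ->
  krein_params E q ->
  cometric q ->
  let m : R := (\rank (E (inord 1)))%:R in
  let a := astar q in let b := bstar q in let c := cstar q in
  (2 < \rank (E (inord 1)))%N ->
  (* Krein array {m, m-1, 1, b3, b4, 1; 1, c2, m-b3, 1, c5, m} *)
  b 0%N = m -> b 1%N = m - 1 -> b 2%N = 1 -> b 5%N = 1 ->
  c 1%N = 1 -> c 3%N = m - b 3%N -> c 4%N = 1 -> c 6%N = m ->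
  a 2%N = a 4%N + a 5%N ->
  (* the polynomials v_i^* *)
  v 0%N = 1 -> v 1%N = 'X ->
  (forall i : nat, (1 <= i <= 6)%N ->
     'X * v i = (if i == 6%N then 1 else c i.+1) *: v i.+1
                + a i *: v i + b i.-1 *: v i.-1) ->
  (m * c 2%N * c 3%N * c 5%N) *: v 7%N =
    ('X ^+ 3 - a 2%N *: 'X ^+ 2 - (m + c 2%N * (m - 1)) *: 'X
       + (m * a 2%N - a 5%N * c 3%N)%:P)
    * ('X ^+ 2 + c 2%N *: 'X - m%:P) * ('X - m%:P) * ('X + 1).
Proof.
move=> HS Himp HE HK [Hc0 Hc1] m a b c Hr hb0 hb1 hb2 hb5 hc1 hc3 hc4 hc6 ha2 hv0 hv1 hrec.
case: HS => n0 [HR0 Hcard Hne Hsym Hmul].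
case: HE => E0 Eorth Enz Esum Ecomb.
have n0R : (n%:R : R) != 0 by rewrite pnatr_eq0 -lt0n.
have Esym i : (E i)^T = E i.
  have [cc ->] := Ecomb i; apply/matrixP=> x y; rewrite !mxE !summxE.
  by apply: eq_bigr => h _; rewrite !mxE Hsym.
have Es h x y : E h y x = E h x y by rewrite -[in LHS](Esym h) mxE.
have Eidem i : E i *m E i = E i by rewrite Eorth eqxx.
have trE i : \tr (E i) = (\rank (E i))%:R := @trace_idem _ _ _ (Eidem i).
have trnz i : \tr (E i) != 0 by rewrite trE pnatr_eq0 mxrank_eq0 (negbTE (Enz i)).
have pick (f : 'I_7 -> R) k : \sum_h (f h *: E h) *m E k = f k *: E k.
  rewrite (bigD1 k) //= big1 ?addr0 => [|h hk]; first by rewrite -scalemxAl Eidem.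
  by rewrite -scalemxAl Eorth (negbTE hk) scaler0.
have indep (al be : 'I_7 -> R) k :
    \sum_h al h *: E h = \sum_h be h *: E h -> al k = be k.
  move=> H; have := congr1 (fun M => M *m E k) H; rewrite /= !mulmx_suml !pick.
  move=> /eqP; rewrite -subr_eq0 -scalerBl scaler_eq0 (negbTE (Enz k)) orbF subr_eq0.
  by move=> /eqP.
have Tq i j h : \tr (map2_mx *%R (E i) (E j) *m E h) = n%:R^-1 * (q i j h * \tr (E h)).
  by rewrite HK -scalemxAl mxtraceZ mulmx_suml pick mxtraceZ.
have Tsum i j h : \tr (map2_mx *%R (E i) (E j) *m E h)
    = \sum_x \sum_y E i x y * E j x y * E h x y.
  rewrite /mxtrace; apply: eq_bigr => x _; rewrite mxE; apply: eq_bigr => y _.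
  by rewrite !mxE (Es h x y).
have Ksym i j h : q i j h * \tr (E h) = q i h j * \tr (E j).
  apply: (mulfI (invr_neq0 n0R)); rewrite -Tq -Tq !Tsum.
  by apply: eq_bigr => x _; apply: eq_bigr => y _; rewrite mulrAC.
have diag0 x h : Rl h x x = (h == ord0).
  have [a0 Ha] := mem_card1 (Hcard x x).
  have : ord0 \in [pred i | Rl i x x] by rewrite inE HR0.
  rewrite Ha inE => /eqP e0.
  by have := Ha h; rewrite !inE -e0.
have rowsum h : \sum_j q (inord 1) j h = \tr (E (inord 1)).
  have [cc Hc] := Ecomb (inord 1).
  have dg x : E (inord 1) x x = cc ord0.
    rewrite Hc summxE (bigD1 ord0) //= big1 ?addr0 => [|k hk].
      by rewrite !mxE diag0 eqxx mulr1.
    by rewrite !mxE diag0 (negbTE hk) mulr0.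
  have tr1 : \tr (E (inord 1)) = n%:R * cc ord0.
    by rewrite /mxtrace (eq_bigr _ (fun x _ => dg x)) sumr_const card_ord mulr_natl.
  have M1 : \sum_j map2_mx *%R (E (inord 1)) (E j) = cc ord0 *: \sum_h E h.
    rewrite Esum; apply/matrixP=> x y; rewrite summxE !mxE.
    under eq_bigr do rewrite mxE.
    rewrite -mulr_sumr -summxE Esum !mxE.
    case: (eqVneq x y) => [<-|nxy]; first by rewrite dg.
    by rewrite !mulr0.
  have M2 : \sum_j map2_mx *%R (E (inord 1)) (E j)
      = \sum_h (n%:R^-1 * \sum_j q (inord 1) j h) *: E h.
    under eq_bigr do rewrite HK.
    rewrite -scaler_sumr exchange_big /= scaler_sumr; apply: eq_bigr => k _.
    by rewrite -scaler_suml scalerA.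
  have := indep _ (fun _ => cc ord0) h (etrans (esym M2) (etrans M1 (scaler_sumr _ _ _ _))).
  by move=> e; rewrite tr1 -e mulrA divff // mul1r.
have van (j k : nat) : (j < 7)%N -> (k < 7)%N -> (j.+1 < k)%N || (k.+1 < j)%N ->
    q (inord 1) (inord j) (inord k) = 0.
  move=> hj hk /orP [lt|lt].
    by apply: Hc0; rewrite !inordK // add1n.
  have := Ksym (inord 1) (inord j) (inord k).
  rewrite (Hc0 (inord 1) (inord k) (inord j)); last by rewrite !inordK // add1n.
  rewrite mul0r => /eqP; rewrite mulf_eq0 (negbTE (trnz _)) orbF.
  by move=> /eqP.
have rs k : (k < 7)%N -> \sum_(0 <= j < 7) q (inord 1) (inord j) (inord k) = m.
  move=> hk; rewrite big_mkord /m -trE -(rowsum (inord k)).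
  by apply: eq_bigr => j _; rewrite inord_val.
have s1 : a 1%N + b 1%N + c 1%N = m.
  have := rs 1%N erefl; rewrite !big_nat_recl // big_geq // addr0.
  rewrite (van 3 1) // (van 4 1) // (van 5 1) // (van 6 1) // => <-.
  rewrite /a /b /c /astar /bstar /cstar /=; ring.
have s2 : a 2%N + b 2%N + c 2%N = m.
  have := rs 2%N erefl; rewrite !big_nat_recl // big_geq // addr0.
  rewrite (van 0 2) // (van 4 2) // (van 5 2) // (van 6 2) // => <-.
  rewrite /a /b /c /astar /bstar /cstar /=; ring.
have s3 : a 3%N + b 3%N + c 3%N = m.
  have := rs 3%N erefl; rewrite !big_nat_recl // big_geq // addr0.
  rewrite (van 0 3) // (van 1 3) // (van 5 3) // (van 6 3) // => <-.
  rewrite /a /b /c /astar /bstar /cstar /=; ring.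
have s4 : a 4%N + b 4%N + c 4%N = m.
  have := rs 4%N erefl; rewrite !big_nat_recl // big_geq // addr0.
  rewrite (van 0 4) // (van 1 4) // (van 2 4) // (van 6 4) // => <-.
  rewrite /a /b /c /astar /bstar /cstar /=; ring.
have s5 : a 5%N + b 5%N + c 5%N = m.
  have := rs 5%N erefl; rewrite !big_nat_recl // big_geq // addr0.
  rewrite (van 0 5) // (van 1 5) // (van 2 5) // (van 3 5) // => <-.
  rewrite /a /b /c /astar /bstar /cstar /=; ring.
have s6 : a 6%N + c 6%N = m.
  have := rs 6%N erefl; rewrite !big_nat_recl // big_geq // addr0.
  rewrite (van 0 6) // (van 1 6) // (van 2 6) // (van 3 6) // (van 4 6) // => <-.
  rewrite /a /b /c /astar /bstar /cstar /=; ring.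

have m0 : m != 0 by rewrite /m pnatr_eq0 -lt0n; exact: (leq_trans _ Hr).
have cnz k : (0 < k < 7)%N -> c k != 0.
  move=> /andP [k0 k7]; rewrite /c /cstar; apply: Hc1.
  by rewrite !inordK ?add1n ?prednK // ltnW.
exact: (@alg R m a b c v m0 (cnz 2%N erefl) (cnz 3%N erefl) (cnz 5%N erefl) hb0 hb1 hb2 hb5 hc1 hc3 hc4 hc6 ha2 s1 s2 s3 s4 s5 s6 hv0 hv1 hrec).
Qed.
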